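(* Let $T$ and $T'$ be Morita context rings. If the Morita context with which $T$ is associated, or the one with which $T'$ is associated, is strict, then $\mathrm{Iso}_0(T,T')\subseteq\mathrm{Iso}_g(T,T')$. More precisely, every element of $\mathrm{Iso}_0^0(T,T')$ is graded and every element of $\mathrm{Iso}_0^1(T,T')$ is anti-graded.
   Context: All rings have an identity $1\neq 0$. A Morita context $(R,S,M,N,f,g)$: rings $R,S$, an $R$-$S$-bimodule $M$, an $S$-$R$-bimodule $N$, bimodule morphisms $f:M\otimes_SN\to R$, $g:N\otimes_RM\to S$, with $[m,n]=f(m\otimes n)$, $(n,m)=g(n\otimes m)$ satisfying $[m,n]m'=m(n,m')$ and $n[m,n']=(n,m)n'$. The context is strict if $f$ and $g$ are surjective. Its Morita context ring $T=\left[\begin{smallmatrix} R & M\\ N & S\end{smallmatrix}\right]$ consists of formal matrices with entrywise addition and product $\left[\begin{smallmatrix} r & m\\ n & s\end{smallmatrix}\right]\left[\begin{smallmatrix} r' & m'\\ n' & s'\end{smallmatrix}\right]=\left[\begin{smallmatrix} rr'+[m,n'] & rm'+ms'\\ nr'+sn' & (n,m')+ss'\end{smallmatrix}\right]$; $T'=\left[\begin{smallmatrix} R' & M'\\ N' & S'\end{smallmatrix}\right]$ similarly. $T$ is $\mathbb Z$-graded with $T_{-1}=\left[\begin{smallmatrix} 0 & 0\\ N & 0\end{smallmatrix}\right]$, $T_0=\left[\begin{smallmatrix} R & 0\\ 0 & S\end{smallmatrix}\right]$, $T_1=\left[\begin{smallmatrix} 0 & M\\ 0 & 0\end{smallmatrix}\right]$,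 $T_i=0$ otherwise. A ring isomorphism $\phi:T\to T'$ is graded if $\phi(T_i)\subseteq T'_i$ for all $i$, anti-graded if $\phi(T_i)\subseteq T'_{-i}$ for all $i$; $\mathrm{Iso}_g(T,T')$ is the set of all graded and all anti-graded isomorphisms. $\mathrm{Iso}_0(T,T')=\mathrm{Iso}_0^0(T,T')\cup\mathrm{Iso}_0^1(T,T')$, where $\mathrm{Iso}_0^0(T,T')$ is the set of maps $\phi\left(\left[\begin{smallmatrix} r & m\\ n & s\end{smallmatrix}\right]\right)=\left[\begin{smallmatrix}\gamma(r) & \gamma(r)m'_0-m'_0\delta(s)+u(m)\\ n'_0\gamma(r)-\delta(s)n'_0+v(n) & \delta(s)\end{smallmatrix}\right]$ with $\gamma:R\to R'$, $\delta:S\to S'$ ring isomorphisms, $u:M\to M'$, $v:N\to N'$ additive bijections with $u(rms)=\gamma(r)u(m)\delta(s)$, $v(snr)=\delta(s)v(n)\gamma(r)$, and $m'_0\in M'$, $n'_0\in N'$ with $[m'_0,N']=0$, $(N',m'_0)=0$, $[M',n'_0]=0$, $(n'_0,M')=0$, $[u(m),v(n)]=\gamma([m,n])$, $(v(n),u(m))=\delta((n,m))$; and $\mathrm{Iso}_0^1(T,T')$ is the set of maps $\psi\left(\left[\begin{smallmatrix} r & m\\ n & s\end{smallmatrix}\right]\right)=\left[\begin{smallmatrix}\sigma(s) & m'_*\rho(r)-\sigma(s)m'_*+\nu(n)\\ \rho(r)n'_*-n'_*\sigma(s)+\mu(m) & \rho(r)\end{smallmatrix}\right]$ with $\rho:R\to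 S'$, $\sigma:S\to R'$ ring isomorphisms, $\mu:M\to N'$, $\nu:N\to M'$ additive bijections with $\mu(rms)=\rho(r)\mu(m)\sigma(s)$, $\nu(snr)=\sigma(s)\nu(n)\rho(r)$, and $m'_*\in M'$, $n'_*\in N'$ with $[m'_*,N']=0$, $(N',m'_* )=0$, $[M',n'_*]=0$, $(n'_*,M')=0$, $(\mu(m),\nu(n))=\rho([m,n])$, $[\nu(n),\mu(m)]=\sigma((n,m))$. *)

(* Defs.v *)
From HB Require Import structures.
From mathcomp Require Import all_boot all_order all_algebra.
Set Implicit Arguments. Unset Strict Implicit. Unset Printing Implicit Defensive.
Import GRing.Theory.
Local Open Scope ring_scope.

(* The bimodule actions are given as explicit functions; the bimodule
   morphisms f : M (x)_S N -> R and g : N (x)_R M -> S are given, via the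
   universal property of the tensor product, as biadditive balanced maps
   [m,n] = pMN m n and (n,m) = pNM n m that are bimodule morphisms. *)
Record morita_context := MoritaContext {
  mc_R : nzRingType;
  mc_S : nzRingType;
  mc_M : zmodType;
  mc_N : zmodType;
  lM : mc_R -> mc_M -> mc_M;
  rM : mc_M -> mc_S -> mc_M;
  lN : mc_S -> mc_N -> mc_N;
  rN : mc_N -> mc_R -> mc_N;
  pMN : mc_M -> mc_N -> mc_R;
  pNM : mc_N -> mc_M -> mc_S;
  lM_mul : forall r r' m, lM (r * r') m = lM r (lM r' m);
  lM_one : forall m, lM 1 m = m;
  lM_addl : forall r r' m, lM (r + r') m = lM r m + lM r' m;
  lM_addr : forall r m m', lM r (m + m') = lM r m + lM r m';
  rM_mul : forall m s s', rM m (s * s') = rM (rM m s) s';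
  rM_one : forall m, rM m 1 = m;
  rM_addl : forall m m' s, rM (m + m') s = rM m s + rM m' s;
  rM_addr : forall m s s', rM m (s + s') = rM m s + rM m s';
  lrM : forall r m s, rM (lM r m) s = lM r (rM m s);
  lN_mul : forall s s' n, lN (s * s') n = lN s (lN s' n);
  lN_one : forall n, lN 1 n = n;
  lN_addl : forall s s' n, lN (s + s') n = lN s n + lN s' n;
  lN_addr : forall s n n', lN s (n + n') = lN s n + lN s n';
  rN_mul : forall n r r', rN n (r * r') = rN (rN n r) r';
  rN_one : forall n, rN n 1 = n;
  rN_addl : forall n n' r, rN (n + n') r = rN n r + rN n' r;
  rN_addr : forall n r r', rN n (r + r') = rN n r + rN n r';
  lrN : forall s n r, rN (lN s n) r = lN s (rN n r);
  (* f : M (x)_S N -> R is a well-defined R-R-bimodule morphism *)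
  pMN_addl : forall m m' n, pMN (m + m') n = pMN m n + pMN m' n;
  pMN_addr : forall m n n', pMN m (n + n') = pMN m n + pMN m n';
  pMN_bal : forall m s n, pMN (rM m s) n = pMN m (lN s n);
  pMN_lin_l : forall r m n, pMN (lM r m) n = r * pMN m n;
  pMN_lin_r : forall m n r, pMN m (rN n r) = pMN m n * r;
  (* g : N (x)_R M -> S is a well-defined S-S-bimodule morphism *)
  pNM_addl : forall n n' m, pNM (n + n') m = pNM n m + pNM n' m;
  pNM_addr : forall n m m', pNM n (m + m') = pNM n m + pNM n m';
  pNM_bal : forall n r m, pNM (rN n r) m = pNM n (lM r m);
  pNM_lin_l : forall s n m, pNM (lN s n) m = s * pNM n m;
  pNM_lin_r : forall n m s, pNM n (rM m s) = pNM n m * s;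
  assocM : forall m n m', lM (pMN m n) m' = rM m (pNM n m');
  assocN : forall n m n', rN n (pMN m n') = lN (pNM n m) n'
}.

(* strict: f and g surjective.  The image of f : M (x)_S N -> R consists of
   the finite sums of elements [m,n]; likewise for g. *)
Definition mc_strict (C : morita_context) : Prop :=
  (forall r : mc_R C, exists l : seq (mc_M C * mc_N C),
      r = \sum_(p <- l) pMN p.1 p.2) /\
  (forall s : mc_S C, exists l : seq (mc_N C * mc_M C),
      s = \sum_(p <- l) pNM p.1 p.2).

(* Elements of the Morita context ring T = [R M; N S]. *)
Record mc_elt (C : morita_context) := MkElt {
  e11 : mc_R C; e12 : mc_M C; e21 : mc_N C; e22 : mc_S C }.

Definition mc_add C (x y : mc_elt C) : mc_elt C :=
  MkElt (e11 x + e11 y) (e12 x + e12 y) (e21 x + e21 y) (e22 x + e22 y).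

Definition mc_mul C (x y : mc_elt C) : mc_elt C :=
  MkElt (e11 x * e11 y + pMN (e12 x) (e21 y))
        (lM (e11 x) (e12 y) + rM (e12 x) (e22 y))
        (rN (e21 x) (e11 y) + lN (e22 x) (e21 y))
        (pNM (e21 x) (e12 y) + e22 x * e22 y).

Definition mc_one C : mc_elt C := MkElt 1 0 0 1.

Definition mc_ring_iso (C C' : morita_context) (phi : mc_elt C -> mc_elt C') : Prop :=
  (forall x y, phi (mc_add x y) = mc_add (phi x) (phi y)) /\
  (forall x y, phi (mc_mul x y) = mc_mul (phi x) (phi y)) /\
  phi (mc_one C) = mc_one C' /\
  bijective phi.

Definition mc_homog C (i : int) (x : mc_elt C) : Prop :=
  if i == 0 then e12 x = 0 /\ e21 x = 0
  else if i == 1 then e11 x = 0 /\ e21 x = 0 /\ e22 x = 0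
  else if i == -1 then e11 x = 0 /\ e12 x = 0 /\ e22 x = 0
  else x = MkElt 0 0 0 0.

Definition mc_graded (C C' : morita_context) (phi : mc_elt C -> mc_elt C') : Prop :=
  mc_ring_iso phi /\ forall (i : int) x, mc_homog i x -> mc_homog i (phi x).

Definition mc_antigraded (C C' : morita_context) (phi : mc_elt C -> mc_elt C') : Prop :=
  mc_ring_iso phi /\ forall (i : int) x, mc_homog i x -> mc_homog (- i) (phi x).

Definition mc_Iso00 (C C' : morita_context) (phi : mc_elt C -> mc_elt C') : Prop :=
  exists (gam : {rmorphism mc_R C -> mc_R C'}) (del : {rmorphism mc_S C -> mc_S C'})
         (u : mc_M C -> mc_M C') (v : mc_N C -> mc_N C')
         (m0 : mc_M C') (n0 : mc_N C'),
    (bijective gam /\ bijective del /\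
        {morph u : x y / x + y} /\ bijective u /\
        {morph v : x y / x + y} /\ bijective v /\
        (forall r m s, u (rM (lM r m) s) = rM (lM (gam r) (u m)) (del s)) /\
        (forall s n r, v (rN (lN s n) r) = rN (lN (del s) (v n)) (gam r)) /\
     (forall n' : mc_N C', pMN m0 n' = 0) /\
         (forall n' : mc_N C', pNM n' m0 = 0) /\
         (forall m' : mc_M C', pMN m' n0 = 0) /\
         (forall m' : mc_M C', pNM n0 m' = 0) /\
         (forall m n, pMN (u m) (v n) = gam (pMN m n)) /\
         (forall m n, pNM (v n) (u m) = del (pNM n m)) /\
         (forall r m n s, phi (MkElt r m n s) =
            MkElt (gam r)
                  (lM (gam r) m0 - rM m0 (del s) + u m)
                  (rN n0 (gam r) - lN (del s) n0 + v n)
                  (del s))).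

Definition mc_Iso01 (C C' : morita_context) (psi : mc_elt C -> mc_elt C') : Prop :=
  exists (rho : {rmorphism mc_R C -> mc_S C'}) (sig : {rmorphism mc_S C -> mc_R C'})
         (mu : mc_M C -> mc_N C') (nu : mc_N C -> mc_M C')
         (ms : mc_M C') (ns : mc_N C'),
    (bijective rho /\ bijective sig /\
        {morph mu : x y / x + y} /\ bijective mu /\
        {morph nu : x y / x + y} /\ bijective nu /\
        (forall r m s, mu (rM (lM r m) s) = rN (lN (rho r) (mu m)) (sig s)) /\
        (forall s n r, nu (rN (lN s n) r) = rM (lM (sig s) (nu n)) (rho r)) /\
     (forall n' : mc_N C', pMN ms n' = 0) /\
         (forall n' : mc_N C', pNM n' ms = 0) /\
         (forall m' : mc_M C', pMN m' ns = 0) /\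
         (forall m' : mc_M C', pNM ns m' = 0) /\
         (forall m n, pNM (mu m) (nu n) = rho (pMN m n)) /\
         (forall m n, pMN (nu n) (mu m) = sig (pNM n m)) /\
         (forall r m n s, psi (MkElt r m n s) =
            MkElt (sig s)
                  (rM ms (rho r) - lM (sig s) ms + nu n)
                  (lN (rho r) ns - rN ns (sig s) + mu m)
                  (rho r))).

(* Main.v *)
Require Import Defs.
From HB Require Import structures.
From mathcomp Require Import all_boot all_order all_algebra.
Set Implicit Arguments. Unset Strict Implicit. Unset Printing Implicit Defensive.
Import GRing.Theory.
Local Open Scope ring_scope.

Lemma idem0 (V : zmodType) (x : V) : x = x + x -> x = 0.
Proof. move=> h; have := congr1 (fun y => y - x) h; rewrite /= addrK subrr.
by move/esym. Qed.

Lemma morph0 (U V : zmodType) (f : U -> V) : {morph f : x y / x + y} -> f 0 = 0.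
Proof. by move=> H; apply: idem0; rewrite -H addr0. Qed.

Section Gen.
Variable C : morita_context.

Lemma lM0l (m : mc_M C) : lM 0 m = 0.
Proof. by apply: idem0; rewrite -lM_addl addr0. Qed.
Lemma rM0r (m : mc_M C) : rM m 0 = 0.
Proof. by apply: idem0; rewrite -rM_addr addr0. Qed.
Lemma lN0l (n : mc_N C) : lN 0 n = 0.
Proof. by apply: idem0; rewrite -lN_addl addr0. Qed.
Lemma rN0r (n : mc_N C) : rN n 0 = 0.
Proof. by apply: idem0; rewrite -rN_addr addr0. Qed.

Lemma L1 (X : Type) (m0 : mc_M C) (a : X -> mc_M C) (b : X -> mc_N C) (l : seq X) :
  (forall n', pNM n' m0 = 0) -> lM (\sum_(p <- l) pMN (a p) (b p)) m0 = 0.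
Proof.
move=> z; elim: l => [|p l IH]; first by rewrite big_nil lM0l.
by rewrite big_cons lM_addl IH assocM z rM0r addr0.
Qed.

Lemma L2 (X : Type) (m0 : mc_M C) (a : X -> mc_N C) (b : X -> mc_M C) (l : seq X) :
  (forall n', pMN m0 n' = 0) -> rM m0 (\sum_(p <- l) pNM (a p) (b p)) = 0.
Proof.
move=> z; elim: l => [|p l IH]; first by rewrite big_nil rM0r.
by rewrite big_cons rM_addr IH -assocM z lM0l addr0.
Qed.

Lemma L3 (X : Type) (n0 : mc_N C) (a : X -> mc_M C) (b : X -> mc_N C) (l : seq X) :
  (forall m', pNM n0 m' = 0) -> rN n0 (\sum_(p <- l) pMN (a p) (b p)) = 0.
Proof.
move=> z; elim: l => [|p l IH]; first by rewrite big_nil rN0r.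
by rewrite big_cons rN_addr IH assocN z lN0l addr0.
Qed.

Lemma L4 (X : Type) (n0 : mc_N C) (a : X -> mc_N C) (b : X -> mc_M C) (l : seq X) :
  (forall m', pMN m' n0 = 0) -> lN (\sum_(p <- l) pNM (a p) (b p)) n0 = 0.
Proof.
move=> z; elim: l => [|p l IH]; first by rewrite big_nil lN0l.
by rewrite big_cons lN_addl IH -assocN z rN0r addr0.
Qed.
End Gen.

Lemma iso00_graded (C C' : morita_context) (phi : mc_elt C -> mc_elt C') :
  mc_strict C \/ mc_strict C' -> mc_Iso00 phi -> mc_graded phi.
Proof.
move=> Hs [gam [del [u [v [m0 [n0 [bg [bd [uD [bu [vD [bv [Hu [Hv
  [z1 [z2 [z3 [z4 [Huv [Hvu Hphi]]]]]]]]]]]]]]]]]]]].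
have [A1 [A2 [A3 A4]]] : (forall r, lM (gam r) m0 = 0) /\
   (forall s, rM m0 (del s) = 0) /\ (forall r, rN n0 (gam r) = 0) /\
   (forall s, lN (del s) n0 = 0).
  case: Hs => [[SR SS]|[SR SS]].
    have eR : forall r, exists l : seq (mc_M C * mc_N C),
        gam r = \sum_(p <- l) pMN (u p.1) (v p.2).
      move=> r; have [l ->] := SR r; exists l; rewrite rmorph_sum.
      by apply: eq_bigr => p _; rewrite Huv.
    have eS : forall s, exists l : seq (mc_N C * mc_M C),
        del s = \sum_(p <- l) pNM (v p.1) (u p.2).
      move=> s; have [l ->] := SS s; exists l; rewrite rmorph_sum.
      by apply: eq_bigr => p _; rewrite Hvu.
    split; [|split; [|split]].
    - by move=> r; have [l ->] := eR r; apply: L1.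
    - by move=> s; have [l ->] := eS s; apply: L2.
    - by move=> r; have [l ->] := eR r; apply: L3.
    - by move=> s; have [l ->] := eS s; apply: L4.
  split; [|split; [|split]].
  - by move=> r; have [l ->] := SR (gam r); apply: L1.
  - by move=> s; have [l ->] := SS (del s); apply: L2.
  - by move=> r; have [l ->] := SR (gam r); apply: L3.
  - by move=> s; have [l ->] := SS (del s); apply: L4.
have H' : forall r m n s, phi (MkElt r m n s) = MkElt (gam r) (u m) (v n) (del s).
  by move=> r m n s; rewrite Hphi A1 A2 A3 A4 !subr0 !add0r.
have u0 := morph0 uD; have v0 := morph0 vD.
have uL : forall r m, u (lM r m) = lM (gam r) (u m).
  by move=> r m; have := Hu r m 1; rewrite !rM_one rmorph1 rM_one.
have uR : forall m s, u (rM m s) = rM (u m) (del s).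
  by move=> m s; have := Hu 1 m s; rewrite !lM_one rmorph1 lM_one.
have vR : forall n r, v (rN n r) = rN (v n) (gam r).
  by move=> n r; have := Hv 1 n r; rewrite !lN_one rmorph1 lN_one.
have vL : forall s n, v (lN s n) = lN (del s) (v n).
  by move=> s n; have := Hv s n 1; rewrite !rN_one rmorph1 rN_one.
split.
  split; [|split; [|split]].
  - move=> [r m n s] [r' m' n' s'].
    by rewrite /mc_add /= !H' /= !rmorphD uD vD.
  - move=> [r m n s] [r' m' n' s'].
    by rewrite /mc_mul /= !H' /= !rmorphD !rmorphM uD vD uL uR vR vL Huv Hvu.
  - by rewrite /mc_one H' !rmorph1 u0 v0.
  - case: bg => gi g1 g2; case: bd => di d1 d2; case: bu => ui u1 u2;
    case: bv => vi w1 w2.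
    exists (fun y => MkElt (gi (e11 y)) (ui (e12 y)) (vi (e21 y)) (di (e22 y))).
      by move=> [r m n s]; rewrite H' /= g1 u1 w1 d1.
    by move=> [r m n s]; rewrite /= H' g2 u2 w2 d2.
move=> i [r m n s]; rewrite /mc_homog H' /=.
case: (i == 0); first by move=> [-> ->]; rewrite u0 v0.
case: (i == 1); first by move=> [-> [-> ->]]; rewrite v0 !rmorph0.
case: (i == -1); first by move=> [-> [-> ->]]; rewrite u0 !rmorph0.
by case=> -> -> -> ->; rewrite u0 v0 !rmorph0.
Qed.

Definition swapC (C : morita_context) : morita_context :=
  @MoritaContext (mc_S C) (mc_R C) (mc_N C) (mc_M C)
    (@lN C) (@rN C) (@lM C) (@rM C) (@pNM C) (@pMN C)
    (@lN_mul C) (@lN_one C) (@lN_addl C) (@lN_addr C)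
    (@rN_mul C) (@rN_one C) (@rN_addl C) (@rN_addr C) (@lrN C)
    (@lM_mul C) (@lM_one C) (@lM_addl C) (@lM_addr C)
    (@rM_mul C) (@rM_one C) (@rM_addl C) (@rM_addr C) (@lrM C)
    (@pNM_addl C) (@pNM_addr C) (@pNM_bal C) (@pNM_lin_l C) (@pNM_lin_r C)
    (@pMN_addl C) (@pMN_addr C) (@pMN_bal C) (@pMN_lin_l C) (@pMN_lin_r C)
    (fun a b c => esym (@assocN C a b c)) (fun a b c => esym (@assocM C a b c)).

Definition swE (C : morita_context) (y : mc_elt C) : mc_elt (swapC C) :=
  @MkElt (swapC C) (e22 y) (e21 y) (e12 y) (e11 y).
Definition swE' (C : morita_context) (y : mc_elt (swapC C)) : mc_elt C :=
  @MkElt C (e22 y) (e21 y) (e12 y) (e11 y).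

Theorem proposition3p1 (C C' : morita_context) :
  mc_strict C \/ mc_strict C' ->
  (forall phi : mc_elt C -> mc_elt C', mc_Iso00 phi -> mc_graded phi) /\
  (forall psi : mc_elt C -> mc_elt C', mc_Iso01 psi -> mc_antigraded psi).
Proof.
move=> Hs; split; first by move=> phi; apply: iso00_graded.
move=> psi [rho [sig [mu [nu [ms [ns [br [bs [muD [bmu [nuD [bnu [Hmu [Hnu
  [z1 [z2 [z3 [z4 [Hmn [Hnm Hpsi]]]]]]]]]]]]]]]]]]]].
have Hs' : mc_strict C \/ mc_strict (swapC C').
  by move: Hs; rewrite /mc_strict => -[[a b]|[a b]]; [left|right].
have Hphi : mc_Iso00 (fun x => swE (psi x)).
  exists rho, sig, mu, nu, ns, ms.
  split; first exact br. split; first exact bs. split; first exact muD.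
  split; first exact bmu. split; first exact nuD. split; first exact bnu.
  split; first exact Hmu. split; first exact Hnu. split; first exact z4.
  split; first exact z3. split; first exact z2. split; first exact z1.
  split; first exact Hmn. split; first exact Hnm.
  by move=> r m n s; rewrite /swE Hpsi.
have [[Ha [Hm [H1 Hb]]] Hg] := iso00_graded Hs' Hphi.
have swK : cancel (@swE C') (@swE' C') by case.
have swK' : cancel (@swE' C') (@swE C') by case.
split.
  split; [|split; [|split]].
  - move=> x y; apply: (can_inj swK); rewrite Ha.
    by case: (psi x) => ????; case: (psi y).
  - move=> x y; apply: (can_inj swK); rewrite Hm.
    case: (psi x) => ????; case: (psi y) => ????; rewrite /swE /mc_mul /=.
    by congr MkElt; rewrite addrC.
  - by apply: (can_inj swK); rewrite H1.
  - case: Hb => g g1 g2.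
    exists (fun y => g (swE y)).
      by move=> x; rewrite g1.
    by move=> y; apply: (can_inj swK); rewrite g2.
move=> i x hx; have := Hg i x hx; rewrite /mc_homog /swE.
case: (psi x) => a b c d /=.
have [->|n0] := eqVneq i 0; first by rewrite oppr0 eqxx; move=> [-> ->].
have [->|n1] := eqVneq i 1.
  rewrite (_ : (- (1:int)) == 0 = false) // (_ : (- (1 : int)) == 1 = false) //.
  by rewrite eqxx => -[-> [-> ->]].
have [->|n2] := eqVneq i (-1).
  by rewrite opprK oner_eq0 eqxx => -[-> [-> ->]].
rewrite oppr_eq0 (negbTE n0) eqr_opp (negbTE n1) eqr_oppLR (negbTE n2).
by case=> -> -> -> ->.
Qed.
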